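(* Let $\mathsf{R}:\widetilde{\mathcal{C}}\to\mathcal{C}$ be a Frobenius extension of an abelian category $\mathcal{C}$, with left adjoint $\mathsf{I}$ and right adjoint $\mathsf{C}$ of $\mathsf{R}$. Then $\widetilde{\mathcal{C}}$ has enough projective objects if and only if $\mathcal{C}$ has enough projective objects. If there are enough projective objects, then (i) the projective objects of $\mathcal{C}$ are exactly the direct summands of objects $\mathsf{R}P$ with $P$ projective in $\widetilde{\mathcal{C}}$; (ii) the projective objects of $\widetilde{\mathcal{C}}$ are exactly the direct summands of objects $\mathsf{I}P$ (equivalently, of objects $\mathsf{C}P$) with $P$ projective in $\mathcal{C}$. The same statements hold with ''projective'' replaced by ''injective'' throughout.
   Context: A Frobenius extension of an abelian category $\mathcal{C}$ is an abelian category $\widetilde{\mathcal{C}}$ together with an additive functor $\mathsf{R}:\widetilde{\mathcal{C}}\to\mathcal{C}$ such that (i) $\mathsf{R}$ has a left adjoint $\mathsf{I}$ and a right adjoint $\mathsf{C}$; (ii) $\mathsf{R},\mathsf{I},\mathsf{C}$ are faithful; (iii) $\mathsf{I}\cong\mathsf{C}\circ\mathsf{E}$ for some auto-equivalence $\mathsf{E}$ of $\mathcal{C}$. *)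

(* Defs.v *)
From HB Require Import structures.
From mathcomp Require Import all_boot all_algebra.
Set Implicit Arguments. Unset Strict Implicit. Unset Printing Implicit Defensive.
Import GRing.Theory.
Local Open Scope ring_scope.

(* A preadditive category: hom-sets are abelian groups, composition is
   bilinear. comp g f is "g after f" for f : a -> b, g : b -> c. *)
Record category := Category {
  ob :> Type;
  hom : ob -> ob -> zmodType;
  idm : forall a, hom a a;
  comp : forall a b c, hom b c -> hom a b -> hom a c;
  comp_idl : forall a b (f : hom a b), comp (idm b) f = f;
  comp_idr : forall a b (f : hom a b), comp f (idm a) = f;
  comp_assoc : forall a b c d (h : hom c d) (g : hom b c) (f : hom a b),
      comp h (comp g f) = comp (comp h g) f;
  comp_addl : forall a b c (g g' : hom b c) (f : hom a b),
      comp (g + g') f = comp g f + comp g' f;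
  comp_addr : forall a b c (g : hom b c) (f f' : hom a b),
      comp g (f + f') = comp g f + comp g f'
}.
Arguments idm {C} a : rename.
Arguments comp {C a b c} g f : rename.

Section CatDefs.
Variable C : category.

Definition monic (a b : C) (f : hom a b) :=
  forall (x : C) (g h : hom x a), comp f g = comp f h -> g = h.
Definition epic (a b : C) (f : hom a b) :=
  forall (x : C) (g h : hom b x), comp g f = comp h f -> g = h.
Definition is_iso (a b : C) (f : hom a b) :=
  exists g : hom b a, comp g f = idm a /\ comp f g = idm b.

Definition has_zero_object :=
  exists z : C, (forall (a : C) (f : hom z a), f = 0) /\
                (forall (a : C) (f : hom a z), f = 0).

(* binary products (= biproducts in a preadditive category) *)
Definition is_product (a b p : C) (pa : hom p a) (pb : hom p b) :=
  forall (x : C) (f : hom x a) (g : hom x b),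
    exists u : hom x p, (comp pa u = f /\ comp pb u = g) /\
      forall v : hom x p, comp pa v = f -> comp pb v = g -> v = u.
Definition has_binary_products :=
  forall a b : C, exists p (pa : hom p a) (pb : hom p b), is_product pa pb.

Definition is_kernel (a b k : C) (f : hom a b) (i : hom k a) :=
  comp f i = 0 /\
  forall (x : C) (g : hom x a), comp f g = 0 ->
    exists u : hom x k, comp i u = g /\
      forall v : hom x k, comp i v = g -> v = u.
Definition is_cokernel (a b q : C) (f : hom a b) (p : hom b q) :=
  comp p f = 0 /\
  forall (x : C) (g : hom b x), comp g f = 0 ->
    exists u : hom q x, comp u p = g /\
      forall v : hom q x, comp v p = g -> v = u.

Definition abelian :=
  has_zero_object /\ has_binary_products /\
      (forall (a b : C) (f : hom a b), exists k (i : hom k a), is_kernel f i) /\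
      (forall (a b : C) (f : hom a b), exists q (p : hom b q), is_cokernel f p) /\
      (forall (k a : C) (i : hom k a), monic i ->
          exists b (f : hom a b), is_kernel f i) /\
      (forall (b q : C) (p : hom b q), epic p ->
          exists a (f : hom a b), is_cokernel f p).

Definition projective_obj (P : C) :=
  forall (a b : C) (e : hom a b), epic e ->
    forall f : hom P b, exists g : hom P a, comp e g = f.
Definition injective_obj (Q : C) :=
  forall (a b : C) (m : hom a b), monic m ->
    forall f : hom a Q, exists g : hom b Q, comp g m = f.

Definition enough_projectives :=
  forall X : C, exists P (e : hom P X), projective_obj P /\ epic e.
Definition enough_injectives :=
  forall X : C, exists Q (m : hom X Q), injective_obj Q /\ monic m.

Definition direct_summand (X Y : C) :=
  exists (i : hom X Y) (p : hom Y X), comp p i = idm X.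
End CatDefs.

Record functor (C D : category) := Functor {
  fobj :> C -> D;
  fmap : forall a b : C, hom a b -> hom (fobj a) (fobj b);
  fmap_id : forall a, fmap (idm a) = idm (fobj a);
  fmap_comp : forall a b c (g : hom b c) (f : hom a b),
      fmap (comp g f) = comp (fmap g) (fmap f)
}.
Arguments fmap {C D} F {a b} f : rename.

Definition additive_functor (C D : category) (F : functor C D) :=
  forall (a b : C) (f g : hom a b), fmap F (f + g) = fmap F f + fmap F g.

Definition faithful (C D : category) (F : functor C D) :=
  forall (a b : C) (f g : hom a b), fmap F f = fmap F g -> f = g.

Definition functor_id (C : category) : functor C C :=
  @Functor C C id (fun a b f => f) (fun a => erefl) (fun a b c g f => erefl).

Lemma functor_comp_id (C D E : category) (G : functor D E) (F : functor C D) a :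
  fmap G (fmap F (idm a)) = idm (G (F a)).
Proof. by rewrite !fmap_id. Qed.
Lemma functor_comp_comp (C D E : category) (G : functor D E) (F : functor C D)
  a b c (g : hom b c) (f : hom a b) :
  fmap G (fmap F (comp g f)) = comp (fmap G (fmap F g)) (fmap G (fmap F f)).
Proof. by rewrite !fmap_comp. Qed.

Definition functor_comp (C D E : category) (G : functor D E) (F : functor C D)
  : functor C E :=
  @Functor C E (fun a => G (F a)) (fun a b f => fmap G (fmap F f))
    (functor_comp_id G F) (functor_comp_comp G F).

Definition nat_iso (C D : category) (F G : functor C D) :=
  exists alpha : forall a : C, hom (F a) (G a),
    (forall a, is_iso (alpha a)) /\
    forall (a b : C) (f : hom a b),
      comp (fmap G f) (alpha a) = comp (alpha b) (fmap F f).

Definition auto_equivalence (C : category) (E : functor C C) :=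
  exists F : functor C C,
    nat_iso (functor_comp E F) (functor_id C) /\
    nat_iso (functor_comp F E) (functor_id C).

Definition adjunction (C D : category) (L : functor C D) (R : functor D C) :=
  exists phi : forall (a : C) (b : D), hom (L a) b -> hom a (R b),
    (forall a b, bijective (phi a b)) /\
    forall (a a' : C) (b b' : D) (h : hom a' a) (f : hom (L a) b) (g : hom b b'),
      phi a' b' (comp g (comp f (fmap L h))) = comp (fmap R g) (comp (phi a b f) h).

Definition frobenius_extension (Ct C : category) (R : functor Ct C)
  (I Cf : functor C Ct) :=
  abelian Ct /\ abelian C /\ additive_functor R /\
  adjunction I R /\ adjunction R Cf /\
  faithful R /\ faithful I /\ faithful Cf /\
  exists E : functor C C,
    auto_equivalence E /\ nat_iso I (functor_comp Cf E).

(* Main.v *)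
Require Import Defs.
From mathcomp Require Import all_boot all_algebra.
From Stdlib Require Import IndefiniteDescription.
Set Implicit Arguments. Unset Strict Implicit. Unset Printing Implicit Defensive.
Local Notation hom := Defs.hom.
Local Notation comp := Defs.comp.
Local Notation idm := Defs.idm.
Local Notation monic := Defs.monic.
Local Notation epic := Defs.epic.

Section Basics.
Variable C : category.
Implicit Types a b c x y : C.

Lemma iso_epic a b (f : hom a b) : is_iso f -> epic f.
Proof.
case=> f' [H1 H2] x g h E.
by rewrite -(comp_idr g) -(comp_idr h) -H2 !comp_assoc E.
Qed.

Lemma iso_monic a b (f : hom a b) : is_iso f -> monic f.
Proof.
case=> f' [H1 H2] x g h E.
by rewrite -(comp_idl g) -(comp_idl h) -H1 -!comp_assoc E.
Qed.

Lemma epic_comp a b c (f : hom a b) (g : hom b c) :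
  epic f -> epic g -> epic (comp g f).
Proof.
move=> Ef Eg x u v E; apply: Eg; apply: Ef; by rewrite -!comp_assoc.
Qed.

Lemma monic_comp a b c (f : hom a b) (g : hom b c) :
  monic f -> monic g -> monic (comp g f).
Proof.
move=> Ef Eg x u v E; apply: Ef; apply: Eg; by rewrite !comp_assoc.
Qed.

Lemma iso_comp a b c (f : hom a b) (g : hom b c) :
  is_iso f -> is_iso g -> is_iso (comp g f).
Proof.
case=> f' [F1 F2] [g' [G1 G2]]; exists (comp f' g'); split.
  by rewrite comp_assoc -(comp_assoc f') G1 comp_idr F1.
by rewrite comp_assoc -(comp_assoc g) F2 comp_idr G2.
Qed.

Lemma iso_inv a b (f : hom a b) : is_iso f ->
  exists g : hom b a, is_iso g /\ comp g f = idm a /\ comp f g = idm b.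
Proof.
case=> g [H1 H2]; exists g; split=> //; by exists f.
Qed.

Lemma iso_ds a b (f : hom a b) : is_iso f ->
  direct_summand a b /\ direct_summand b a.
Proof. case=> g [H1 H2]; split; [exists f, g | exists g, f]; by []. Qed.

Lemma ds_trans a b c : direct_summand a b -> direct_summand b c ->
  direct_summand a c.
Proof.
case=> i [p H] [i' [p' H']]; exists (comp i' i), (comp p p').
by rewrite comp_assoc -(comp_assoc p) H' comp_idr H.
Qed.

Lemma proj_ds a b : projective_obj b -> direct_summand a b -> projective_obj a.
Proof.
move=> Pb [i [p H]] u v e He f.
have [g Hg] := Pb _ _ e He (comp f p).
exists (comp g i); by rewrite comp_assoc Hg -comp_assoc H comp_idr.
Qed.

Lemma inj_ds a b : injective_obj b -> direct_summand a b -> injective_obj a.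
Proof.
move=> Pb [i [p H]] u v m Hm f.
have [g Hg] := Pb _ _ m Hm (comp i f).
exists (comp p g); by rewrite -comp_assoc Hg comp_assoc H comp_idl.
Qed.

Lemma proj_split a b (e : hom a b) : projective_obj b -> epic e ->
  direct_summand b a.
Proof. move=> Pb He; have [g Hg] := Pb _ _ e He (idm b); by exists g, e. Qed.

Lemma conj_epic_monic a b a' b' (f : hom a b) (f' : hom a' b')
  (u : hom a a') (v : hom b b') : is_iso u -> is_iso v ->
  comp f' u = comp v f ->
  (epic f -> epic f') /\ (monic f' -> monic f).
Proof.
move=> Iu Iv E.
have [u' [Iu' [U1 U2]]] := iso_inv Iu.
have [v' [Iv' [V1 V2]]] := iso_inv Iv.
have E1 : f' = comp v (comp f u').
  by rewrite comp_assoc -E -comp_assoc U2 comp_idr.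
have E2 : f = comp v' (comp f' u).
  by rewrite E comp_assoc V1 comp_idl.
split=> H.
  rewrite E1; apply: epic_comp; last exact: iso_epic.
  apply: epic_comp => //; exact: iso_epic.
rewrite E2; apply: monic_comp; last exact: iso_monic.
apply: monic_comp => //; exact: iso_monic.
Qed.

Lemma conj_sym a b a' b' (f : hom a b) (f' : hom a' b')
  (u : hom a a') (v : hom b b') : is_iso u -> is_iso v ->
  comp f' u = comp v f ->
  exists (u' : hom a' a) (v' : hom b' b), [/\ is_iso u', is_iso v' &
    comp f u' = comp v' f'].
Proof.
move=> Iu Iv E.
have [u' [Iu' [U1 U2]]] := iso_inv Iu.
have [v' [Iv' [V1 V2]]] := iso_inv Iv.
exists u', v'; split=> //.
have E2 : f = comp v' (comp f' u).
  by rewrite E comp_assoc V1 comp_idl.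
by rewrite E2 -!comp_assoc U2 comp_idr.
Qed.
End Basics.

Section Functors.
Lemma fmap_iso (C D : category) (F : functor C D) (a b : C) (f : hom a b) :
  is_iso f -> is_iso (fmap F f).
Proof.
case=> g [H1 H2]; exists (fmap F g); by rewrite -!fmap_comp H1 H2 !fmap_id.
Qed.

Lemma fmap_ds (C D : category) (F : functor C D) (a b : C) :
  direct_summand a b -> direct_summand (F a) (F b).
Proof.
case=> i [p H]; exists (fmap F i), (fmap F p); by rewrite -fmap_comp H fmap_id.
Qed.
End Functors.

Definition adjP (C D : category) (L : functor C D) (R : functor D C) :=
  exists (phi : forall (a : C) (b : D), hom (L a) b -> hom a (R b))
         (psi : forall (a : C) (b : D), hom a (R b) -> hom (L a) b),
  [/\ (forall a b, cancel (phi a b) (psi a b)),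
      (forall a b, cancel (psi a b) (phi a b)),
      (forall a b b' (f : hom (L a) b) (g : hom b b'),
          phi a b' (comp g f) = comp (fmap R g) (phi a b f)) &
      (forall a a' b (h : hom a' a) (f : hom (L a) b),
          phi a' b (comp f (fmap L h)) = comp (phi a b f) h)].

Lemma adjunction_adjP (C D : category) (L : functor C D) (R : functor D C) :
  adjunction L R -> adjP L R.
Proof.
case=> phi [Hb Hn].
have H : forall a b, {g : hom a (R b) -> hom (L a) b |
    cancel (phi a b) g /\ cancel g (phi a b)}.
  move=> a b; apply: constructive_indefinite_description.
  by case: (Hb a b) => g H1 H2; exists g.
exists phi, (fun a b => proj1_sig (H a b)); split.
- by move=> a b; case: (proj2_sig (H a b)).
- by move=> a b; case: (proj2_sig (H a b)).
- move=> a b b' f g; have := Hn a a b b' (idm a) f g.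
  by rewrite fmap_id !comp_idr.
- move=> a a' b h f; have := Hn a a' b b h f (idm b).
  by rewrite fmap_id !comp_idl.
Qed.

Section Adj.
Variables (C D : category) (L : functor C D) (R : functor D C).
Hypothesis A : adjP L R.

Lemma left_adj_epic (a b : C) (e : hom a b) : epic e -> epic (fmap L e).
Proof.
case: A => phi [psi [K1 K2 N1 N2]] He x g h E.
have: phi _ _ (comp g (fmap L e)) = phi _ _ (comp h (fmap L e)) by rewrite E.
rewrite !N2 => /He E'.
by rewrite -(K1 _ _ g) -(K1 _ _ h) E'.
Qed.

Lemma right_adj_monic (a b : D) (m : hom a b) : monic m -> monic (fmap R m).
Proof.
case: A => phi [psi [K1 K2 N1 N2]] Hm x g h E.
have Eg := K2 _ _ g; have Eh := K2 _ _ h.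
move: (psi _ _ g) (psi _ _ h) Eg Eh E => g' h' <- <- E.
rewrite -!N1 in E.
have /Hm -> // : comp m g' = comp m h'.
by rewrite -(K1 _ _ (comp m g')) E K1.
Qed.

Lemma left_adj_proj (P : C) :
  (forall (a b : D) (e : hom a b), epic e -> epic (fmap R e)) ->
  projective_obj P -> projective_obj (L P).
Proof.
case: A => phi [psi [K1 K2 N1 N2]] HR PP a b e He f.
have [g Hg] := PP _ _ _ (HR _ _ e He) (phi _ _ f).
exists (psi _ _ g).
by rewrite -(K1 _ _ (comp e _)) N1 K2 Hg K1.
Qed.

Lemma counit_epic (Y : D) : faithful R ->
  exists eps : hom (L (R Y)) Y, epic eps.
Proof.
case: A => phi [psi [K1 K2 N1 N2]] HF.
exists (psi _ _ (idm (R Y))) => x g h E.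
apply: HF.
have: phi _ _ (comp g (psi _ _ (idm (R Y)))) =
      phi _ _ (comp h (psi _ _ (idm (R Y)))) by rewrite E.
by rewrite !N1 K2 !comp_idr.
Qed.
End Adj.

Section Core.
Variables (D C : category) (R : functor D C) (L M : functor C D).
Hypotheses (A1 : adjP L R) (A2 : adjP R M) (FR : faithful R) (FM : faithful M).
Hypothesis ME : forall (a b : C) (e : hom a b), epic e -> epic (fmap M e).
Hypothesis DS1 : forall P : C, projective_obj P ->
  exists P', projective_obj P' /\ direct_summand (M P) (L P').
Hypothesis DS2 : forall P : C, projective_obj P ->
  exists P', projective_obj P' /\ direct_summand (L P) (M P').

Let RE := left_adj_epic A2.
Let LE := left_adj_epic A1.

Lemma core_RP (P : D) : projective_obj P -> projective_obj (R P).
Proof. move=> HP; exact (@left_adj_proj _ _ _ _ A2 P ME HP). Qed.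
Lemma core_LP (P : C) : projective_obj P -> projective_obj (L P).
Proof. move=> HP; exact (@left_adj_proj _ _ _ _ A1 P RE HP). Qed.

Lemma core_DC : enough_projectives D -> enough_projectives C.
Proof.
move=> HD X.
have [P [e [PP Pe]]] := HD (M X).
have [eps Heps] := counit_epic A2 X FM.
exists (R P), (comp eps (fmap R e)); split; first exact: core_RP.
apply: epic_comp => //; exact: RE.
Qed.

Lemma core_CD : enough_projectives C -> enough_projectives D.
Proof.
move=> HC Y.
have [P [e [PP Pe]]] := HC (R Y).
have [eps Heps] := counit_epic A1 Y FR.
exists (L P), (comp eps (fmap L e)); split; first exact: core_LP.
apply: epic_comp => //; exact: LE.
Qed.

Lemma core_main :
  (enough_projectives D <-> enough_projectives C) /\
  (enough_projectives C ->
     (forall X : C, projective_obj X <->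
        exists P : D, projective_obj P /\ direct_summand X (R P)) /\
     (forall Y : D, projective_obj Y <->
        exists P : C, projective_obj P /\ direct_summand Y (L P)) /\
     (forall Y : D, projective_obj Y <->
        exists P : C, projective_obj P /\ direct_summand Y (M P))).
Proof.
split; first by split; [exact: core_DC | exact: core_CD].
move=> HC; have HD := core_CD HC.
have partL : forall Y : D, projective_obj Y <->
        exists P : C, projective_obj P /\ direct_summand Y (L P).
  move=> Y; split.
    move=> PY; have [P [e [PP Pe]]] := HC (R Y).
    have [eps Heps] := counit_epic A1 Y FR.
    exists P; split=> //; exact: (proj_split PY (epic_comp (LE Pe) Heps)).
  case=> P [PP H]; apply: proj_ds H; exact: core_LP.
split.
  move=> X; split.
    move=> PX; have [P [e [PP Pe]]] := HD (M X).
    have [eps Heps] := counit_epic A2 X FM.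
    exists P; split=> //; exact: (proj_split PX (epic_comp (RE Pe) Heps)).
  case=> P [PP H]; apply: proj_ds H; exact: core_RP.
split=> // Y; split.
  move/partL=> [P [PP H]]; have [P' [PP' H']] := DS2 PP.
  exists P'; split=> //; exact: ds_trans H'.
case=> P [PP H]; have [P' [PP' H']] := DS1 PP.
apply: proj_ds H; apply: proj_ds H'; exact: core_LP.
Qed.
End Core.

Definition opC (C : category) : category :=
  @Category (ob C) (fun a b => @Defs.hom C b a) (@Defs.idm C)
    (fun a b c g f => comp f g)
    (fun a b f => comp_idr f) (fun a b f => comp_idl f)
    (fun a b c d h g f => esym (comp_assoc f g h))
    (fun a b c g g' f => comp_addr f g g')
    (fun a b c g f f' => comp_addl f f' g).

Definition opF (C D : category) (F : functor C D) : functor (opC C) (opC D) :=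
  @Functor (opC C) (opC D) (fobj F) (fun a b f => fmap F f)
    (fun a => fmap_id F a) (fun a b c g f => fmap_comp F f g).

Lemma adjP_op (C D : category) (L : functor C D) (R : functor D C) :
  adjP L R -> adjP (opF R) (opF L).
Proof.
case=> phi [psi [K1 K2 N1 N2]].
exists (fun b a => psi a b), (fun b a => phi a b); split.
- by move=> b a; exact: K2.
- by move=> b a; exact: K1.
- move=> b a a' f g /=.
  by apply: (can_inj (K1 _ _)); rewrite K2 N2 K2.
- move=> b b' a h f /=.
  by apply: (can_inj (K1 _ _)); rewrite K2 N1 K2.
Qed.

Lemma ds_op (C : category) (X Y : C) :
  @direct_summand (opC C) X Y <-> direct_summand X Y.
Proof. by split; case=> i [p H]; exists p, i. Qed.

Lemma proj_op (C : category) (P : C) :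
  @projective_obj (opC C) P <-> injective_obj P.
Proof. by split=> H a b m Hm f; have [g Hg] := H b a m Hm f; exists g. Qed.

Lemma enough_op (C : category) :
  enough_projectives (opC C) <-> enough_injectives C.
Proof.
split=> H X; have [Q [m [HQ Hm]]] := H X; exists Q, m; split=> //;
  by apply/proj_op.
Qed.

Section Conj.
Variable C : category.
Lemma conj_inv (a b a' b' : C) (f : hom a b) (f' : hom a' b')
  (u : hom a a') (v : hom b b') (u' : hom a' a) (v' : hom b' b) :
  comp u u' = idm a' -> comp v' v = idm b -> comp f' u = comp v f ->
  comp v' f' = comp f u'.
Proof.
move=> U V E.
rewrite -(comp_idr f') -U (comp_assoc f' u u') E -(comp_assoc v f u').
by rewrite comp_assoc V comp_idl.
Qed.
End Conj.

Section Equiv1.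
Variables (C : category) (E F : functor C C).
Hypotheses (Ha : nat_iso (functor_comp E F) (functor_id C))
           (Hb : nat_iso (functor_comp F E) (functor_id C)).

Lemma faithE : faithful E.
Proof.
case: Hb => b [Ib Nb] x y g h H.
have N : forall x y (f : hom x y), comp f (b x) = comp (b y) (fmap F (fmap E f)).
  exact: Nb.
apply: (iso_epic (Ib x)); by rewrite !N H.
Qed.

Lemma epicF (x y : C) (e : hom x y) : epic e -> epic (fmap F e).
Proof.
case: Ha => a [Ia Na] He z g h H.
have N : forall x y (f : hom x y), comp f (a x) = comp (a y) (fmap E (fmap F f)).
  exact: Na.
have [u' [v' [Iu Iv E']]] := conj_sym (Ia x) (Ia y) (N _ _ e).
have H1 : epic (fmap E (fmap F e)) := (conj_epic_monic Iu Iv E').1 He.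
apply: faithE; apply: H1; by rewrite -!fmap_comp H.
Qed.

Lemma monicF (x y : C) (e : hom x y) : monic e -> monic (fmap F e).
Proof.
case: Ha => a [Ia Na] He z g h H.
have N : forall x y (f : hom x y), comp f (a x) = comp (a y) (fmap E (fmap F f)).
  exact: Na.
have H1 : monic (fmap E (fmap F e)) := (conj_epic_monic (Ia x) (Ia y) (N _ _ e)).2 He.
apply: faithE; apply: H1; by rewrite -!fmap_comp H.
Qed.
End Equiv1.

Section Equiv2.
Variables (C : category) (E F : functor C C).
Hypotheses (Ha : nat_iso (functor_comp E F) (functor_id C))
           (Hb : nat_iso (functor_comp F E) (functor_id C)).

Lemma projF (P : C) : projective_obj P -> projective_obj (F P).
Proof.
move=> PP x y e He f.
case: Ha => /= a [Ia Na]; case: Hb => /= b [Ib Nb].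
have N : forall x y (f : hom x y), comp f (b x) = comp (b y) (fmap F (fmap E f)).
  exact: Nb.
have [a0' [Ia0' [A1 A2]]] := iso_inv (Ia P).
have [g Hg] := PP _ _ _ (epicF Hb Ha He) (comp (fmap E f) a0').
have Iw : is_iso (comp (b (F P)) (fmap F a0')).
  apply: iso_comp => //; exact: fmap_iso.
have [w' [_ [W1 W2]]] := iso_inv Iw.
exists (comp (comp (b x) (fmap F g)) w').
rewrite comp_assoc.
have -> : comp e (comp (b x) (fmap F g)) = comp f (comp (b (F P)) (fmap F a0')).
  by rewrite comp_assoc N -comp_assoc -fmap_comp Hg fmap_comp comp_assoc -N
    comp_assoc.
by rewrite -comp_assoc W2 comp_idr.
Qed.

Lemma injF (Q : C) : injective_obj Q -> injective_obj (F Q).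
Proof.
move=> PQ x y m Hm f.
case: Ha => /= a [Ia Na]; case: Hb => /= b [Ib Nb].
have N : forall x y (f : hom x y), comp f (b x) = comp (b y) (fmap F (fmap E f)).
  exact: Nb.
have [g Hg] := PQ _ _ _ (monicF Hb Ha Hm) (comp (a Q) (fmap E f)).
have [ba' [_ [B1 B2]]] := iso_inv (Ib x).
have [bb' [_ [B3 B4]]] := iso_inv (Ib y).
have [bq' [Ibq [B5 B6]]] := iso_inv (Ib (F Q)).
have Em : comp bb' m = comp (fmap F (fmap E m)) ba' := conj_inv B2 B3 (N _ _ m).
have Ef : comp bq' f = comp (fmap F (fmap E f)) ba' := conj_inv B2 B5 (N _ _ f).
have Iw : is_iso (comp (fmap F (a Q)) bq').
  apply: iso_comp => //; exact: fmap_iso.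
have [w' [_ [W1 W2]]] := iso_inv Iw.
exists (comp w' (comp (fmap F g) bb')).
rewrite -comp_assoc.
have -> : comp (comp (fmap F g) bb') m = comp (comp (fmap F (a Q)) bq') f.
  by rewrite -comp_assoc Em comp_assoc -fmap_comp Hg fmap_comp -comp_assoc
    -Ef comp_assoc.
by rewrite comp_assoc W1 comp_idl.
Qed.
End Equiv2.

Section Frob.
Variables (Ct C : category) (R : functor Ct C) (I Cf : functor C Ct)
  (E F : functor C C).
Hypotheses (A1 : adjP I R) (A2 : adjP R Cf).
Hypotheses (Ha : nat_iso (functor_comp E F) (functor_id C))
           (Hb : nat_iso (functor_comp F E) (functor_id C))
           (Hg : nat_iso I (functor_comp Cf E)).

Lemma Cf_epic (x y : C) (e : hom x y) : epic e -> epic (fmap Cf e).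
Proof.
move=> He.
case: Ha => /= a [Ia Na]; case: Hg => /= g [Ig Ng].
have Eq : comp (fmap Cf e) (comp (fmap Cf (a x)) (g (F x))) =
          comp (comp (fmap Cf (a y)) (g (F y))) (fmap I (fmap F e)).
  have N : forall x y (f : hom x y), comp f (a x) = comp (a y) (fmap E (fmap F f)).
    exact: Na.
  rewrite comp_assoc -fmap_comp N fmap_comp -comp_assoc Ng.
  by rewrite comp_assoc.
have Iu : is_iso (comp (fmap Cf (a x)) (g (F x))).
  apply: iso_comp => //; exact: fmap_iso.
have Iv : is_iso (comp (fmap Cf (a y)) (g (F y))).
  apply: iso_comp => //; exact: fmap_iso.
apply: (conj_epic_monic Iu Iv Eq).1.
apply: (left_adj_epic A1); exact (epicF Ha Hb He).
Qed.

Lemma I_monic (x y : C) (m : hom x y) : monic m -> monic (fmap I m).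
Proof.
move=> Hm.
case: Hg => /= g [Ig Ng].
apply: (conj_epic_monic (Ig x) (Ig y) (Ng _ _ m)).2.
apply: (right_adj_monic A2); exact (monicF Hb Ha Hm).
Qed.

Lemma ds_I (P : C) : direct_summand (I P) (Cf (E P)).
Proof. case: Hg => /= g [Ig Ng]; exact: (iso_ds (Ig P)).1. Qed.

Lemma ds_Cf (P : C) : direct_summand (Cf P) (I (F P)).
Proof.
case: Ha => /= a [Ia Na]; case: Hg => /= g [Ig Ng].
have Iu : is_iso (comp (fmap Cf (a P)) (g (F P))).
  apply: iso_comp => //; exact: fmap_iso.
exact: (iso_ds Iu).2.
Qed.
End Frob.

Theorem proposition2p2p1 (Ct C : category) (R : functor Ct C) (I Cf : functor C Ct) :
  frobenius_extension R I Cf ->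
  (* projectives *)
  (enough_projectives Ct <-> enough_projectives C) /\
  (enough_projectives C ->
     (forall X : C, projective_obj X <->
        exists P : Ct, projective_obj P /\ direct_summand X (R P)) /\
     (forall Y : Ct, projective_obj Y <->
        exists P : C, projective_obj P /\ direct_summand Y (I P)) /\
     (forall Y : Ct, projective_obj Y <->
        exists P : C, projective_obj P /\ direct_summand Y (Cf P))) /\
  (* injectives *)
  (enough_injectives Ct <-> enough_injectives C) /\
  (enough_injectives C ->
     (forall X : C, injective_obj X <->
        exists Q : Ct, injective_obj Q /\ direct_summand X (R Q)) /\
     (forall Y : Ct, injective_obj Y <->
        exists Q : C, injective_obj Q /\ direct_summand Y (I Q)) /\
     (forall Y : Ct, injective_obj Y <->
        exists Q : C, injective_obj Q /\ direct_summand Y (Cf Q))).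
Proof.
case=> _ [_ [_ [HIR [HRC [FR [FI [FC [E [[F [Ha Hb]] Hg]]]]]]]]].
have A1 := adjunction_adjP HIR; have A2 := adjunction_adjP HRC.
have P1 := core_main A1 A2 FR FC (@Cf_epic Ct C R I Cf E F A1 Ha Hb Hg)
  (fun P PP => ex_intro _ (F P) (conj (projF Ha Hb PP) (ds_Cf Ha Hg P)))
  (fun P PP => ex_intro _ (E P) (conj (projF Hb Ha PP) (ds_I Hg P))).
have P2 := @core_main (opC Ct) (opC C) (opF R) (opF Cf) (opF I)
  (adjP_op A2) (adjP_op A1) (fun a b f g => FR b a f g) (fun a b f g => FI b a f g)
  (fun a b e He => @I_monic Ct C R I Cf E F A2 Ha Hb Hg b a e He)
  (fun P PP => ex_intro _ (E P) (conj (proj2 (@proj_op C (E P)) (injF Hb Ha (proj1 (@proj_op C P) PP))) (proj2 (@ds_op Ct (I P) (Cf (E P))) (ds_I Hg P))))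
  (fun P PP => ex_intro _ (F P) (conj (proj2 (@proj_op C (F P)) (injF Ha Hb (proj1 (@proj_op C P) PP))) (proj2 (@ds_op Ct (Cf P) (I (F P))) (ds_Cf Ha Hg P)))).
case: P1 => P1a P1b; case: P2 => P2a P2b.
split=> //; split=> //.
split.
  split=> H; apply/enough_op; [apply/P2a | apply/P2a]; exact/enough_op.
move=> HC; have [Q1 [Q2 Q3]] := P2b (proj2 (enough_op C) HC).
split; [|split].
- move=> X; split.
    move=> /(proj2 (@proj_op C X)) /Q1 [Q [HQ Hd]]; exists Q; split;
      [exact/(@proj_op Ct Q) | exact/ds_op].
  case=> Q [HQ Hd]; apply/(@proj_op C X); apply/Q1; exists Q; split;
    [exact/(@proj_op Ct Q) | exact/ds_op].
- move=> X; split.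
    move=> /(proj2 (@proj_op Ct X)) /Q3 [Q [HQ Hd]]; exists Q; split;
      [exact/(@proj_op C Q) | exact/ds_op].
  case=> Q [HQ Hd]; apply/(@proj_op Ct X); apply/Q3; exists Q; split;
    [exact/(@proj_op C Q) | exact/ds_op].
- move=> X; split.
    move=> /(proj2 (@proj_op Ct X)) /Q2 [Q [HQ Hd]]; exists Q; split;
      [exact/(@proj_op C Q) | exact/ds_op].
  case=> Q [HQ Hd]; apply/(@proj_op Ct X); apply/Q2; exists Q; split;
    [exact/(@proj_op C Q) | exact/ds_op].
Qed.
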